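(* Let $\mathcal{M}=(S,A,\Delta,T,\rho)$ be a w\~pMDP with $T=\{t_0,\dots,t_n\}$ and $0=\rho(t_0)<\rho(t_1)<\dots<\rho(t_n)$, and let $\mathcal{N}$ be the \~pMDP obtained by adding fresh target states $\mathit{fin},\mathit{fail}$ (the only targets of $\mathcal{N}$), a fresh action $a\notin A$, and the transitions $(t_i,a,\mathit{fin})$ and $(t_i,a,t_{i-1})$ for $1\le i\le n$ and $(t_0,a,\mathit{fail})$. Then for every graph-preserving valuation $\mathsf{val}$ of $\mathcal{N}$ and every strategy $\sigma$ of $\mathcal{N}$, $0=\mathbb{P}^{t_0}[\Diamond \mathit{fin}]<\mathbb{P}^{t_1}[\Diamond \mathit{fin}]<\dots<\mathbb{P}^{t_n}[\Diamond \mathit{fin}]$, where probabilities are taken in the Markov chain induced by $\mathsf{val}$ and $\sigma$ on $\mathcal{N}$.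
   Context: A w\~pMDP $(S,A,\Delta,T,\rho)$ consists of finite states $S$, actions $A$, targets $T\subseteq S$ (without outgoing transitions), a set of transitions $\Delta\subseteq (S\setminus T)\times A\times S$ and weights $\rho:T\to\mathbb{Q}$; a \~pMDP is one with $T=\{\mathit{fin},\mathit{fail}\}$. A graph-preserving valuation assigns to each state-action pair $(s,a)$ with transitions in $\Delta$ a probability distribution with full support on $\{s':(s,a,s')\in\Delta\}$. A strategy maps each non-target state $s$ to an action $a$ available at $s$, i.e. such that $\Delta$ contains a transition $(s,a,s')$ (so in $\mathcal{N}$ the only action available at each $t_i$ is $a$); together with a valuation it induces a Markov chain, and $\mathbb{P}^s[\Diamond\mathit{fin}]$ is the probability of reaching $\mathit{fin}$ from $s$ in it. *)

(* Defs.v *)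
From HB Require Import structures.
From mathcomp Require Import all_boot all_order all_algebra.
From mathcomp Require Import classical_sets reals.
Set Implicit Arguments. Unset Strict Implicit. Unset Printing Implicit Defensive.
Import Order.TTheory GRing.Theory Num.Theory.
Local Open Scope ring_scope.

Section Construction.
Variables (S A : finType).

Definition NS : finType := (S + bool)%type.
Definition fin : NS := inr true.
Definition fail : NS := inr false.
(* Actions of N: actions of M (Some) plus the fresh action a = None. *)
Definition NA : finType := option A.

Definition N_target (s : NS) : bool := if s is inr _ then true else false.

Definition N_trans (Delta : S -> A -> S -> bool) (n : nat) (t : 'I_n.+1 -> S)
  (s : NS) (a : NA) (s' : NS) : bool :=
  match s, a with
  | inl x, Some b => if s' is inl y then Delta x b y else false
  | inl x, None =>
      match s' with
      | inr true => [exists i : 'I_n.+1, (0 < i)%N && (t i == x)]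
      | inl y => [exists i : 'I_n.+1, [&& (0 < i)%N, t i == x & t (inord i.-1) == y]]
      | inr false => t ord0 == x
      end
  | inr _, _ => false
  end.
End Construction.

Section MC.
Variables (St Ac : finType) (R : realType).
Variable (Delta : St -> Ac -> St -> bool) (target : St -> bool).

Definition graph_preserving (val : St -> Ac -> St -> R) : Prop :=
  forall s a, [exists s', Delta s a s'] ->
    [/\ forall s', Delta s a s' -> 0 < val s a s',
        forall s', ~~ Delta s a s' -> val s a s' = 0
      & \sum_(s' : St) val s a s' = 1].

Definition is_strategy (sigma : St -> Ac) : Prop :=
  forall s, ~~ target s -> exists s', Delta s (sigma s) s'.

Fixpoint reach_within (val : St -> Ac -> St -> R) (sigma : St -> Ac) (goal : St)
  (k : nat) (s : St) : R :=
  if target s then (s == goal)%:R else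
  match k with
  | 0 => (s == goal)%:R
  | k'.+1 => \sum_(s' : St) val s (sigma s) s' * reach_within val sigma goal k' s'
  end.

(* P^s[<> goal] = sup_k P^s[<>^{<=k} goal] (measure of an increasing union) *)
Definition prob_reach (val : St -> Ac -> St -> R) (sigma : St -> Ac) (goal : St)
  (s : St) : R :=
  sup (range (fun k => reach_within val sigma goal k s)).
End MC.

(* Main.v *)
Require Import Defs.
From HB Require Import structures.
From mathcomp Require Import all_boot all_order all_algebra.
From mathcomp Require Import classical_sets reals.
From mathcomp Require Import lra.
Import Order.TTheory GRing.Theory Num.Theory.
Local Open Scope ring_scope.

Lemma sup_max (R : realType) (E : set R) (x : R) :
  E x -> (forall y, E y -> y <= x) -> sup E = x.
Proof.
move=> Ex ub; apply/le_anti/andP; split.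
  by apply: ge_sup; [exists x | move=> y Ey; exact: ub].
have hu : has_ubound E by exists x => y Ey; exact: ub.
exact: (ub_le_sup hu).
Qed.

Theorem lemma1 (R : realType) (S A : finType)
  (Delta : S -> A -> S -> bool) (T : {set S}) (rho : S -> rat)
  (n : nat) (t : 'I_n.+1 -> S)
  (HDelta : forall s a s', Delta s a s' -> s \notin T)
  (HT : forall x, x \in T <-> exists i, t i = x)
  (Hrho0 : rho (t ord0) = 0)
  (Hrho : forall i : nat, (i < n)%N -> rho (t (inord i)) < rho (t (inord i.+1)))
  (val : NS S -> NA A -> NS S -> R) (sigma : NS S -> NA A)
  (Hval : graph_preserving (N_trans Delta t) val)
  (Hsigma : is_strategy (N_trans Delta t) (@N_target S) sigma) :
  prob_reach (@N_target S) val sigma (fin S) (inl (t ord0)) = 0 /\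
  (forall i : nat, (i < n)%N ->
     prob_reach (@N_target S) val sigma (fin S) (inl (t (inord i))) <
     prob_reach (@N_target S) val sigma (fin S) (inl (t (inord i.+1)))).
Proof.
pose tt (j : nat) := t (inord j).
have mono : forall i j, (i < j)%N -> (j <= n)%N -> rho (tt i) < rho (tt j).
  move=> i; elim=> [//|j IH] lt jn.
  have hj := Hrho j jn.
  rewrite ltnS leq_eqVlt in lt; case/orP: lt => [/eqP ->//|lt].
  exact: lt_trans (IH lt (ltnW jn)) hj.
have injn : forall i j, (i <= n)%N -> (j <= n)%N -> tt i = tt j -> i = j.
  move=> i j ilen jlen e; case: (ltngtP i j) => // c.
    by have := mono _ _ c jlen; rewrite e ltxx.
  by have := mono _ _ c ilen; rewrite e ltxx.
have tinj : injective t.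
  move=> i j e; apply: val_inj; apply: (injn i j); [exact: (ltn_ord i)|exact: (ltn_ord j)|].
  by rewrite /tt !inord_val.
have sig : forall j, sigma (inl (tt j)) = None.
  move=> j; have := Hsigma (inl (tt j)) isT; case: (sigma _) => // b [[y|//]] /=.
  move/HDelta; have: tt j \in T by apply/HT; exists (inord j).
  by move=> ->.
pose RW k s := reach_within (@N_target S) val sigma (fin S) k s.
have RW0 : forall j, RW 0%N (inl (tt j)) = 0 by [].
have RWfail : forall k, RW k (fail S) = 0 by case.
have RWfin : forall k, RW k (fin S) = 1 by case.
have tr0 : forall s', N_trans Delta t (inl (tt 0)) None s' = (s' == fail S).
  case=> [y|[|]] /=.
  - apply/existsP => -[i /and3P [ip /eqP ti _]].
    have : i = inord 0 by apply: tinj.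
    by move=> ei; move: ip; rewrite ei inordK.
  - apply/existsP => -[i /andP [ip /eqP ti]].
    have : i = inord 0 by apply: tinj.
    by move=> ei; move: ip; rewrite ei inordK.
  - by rewrite /tt; apply/eqP; congr t; apply: val_inj; rewrite /= inordK.
have trS : forall j, (0 < j <= n)%N -> forall s',
    N_trans Delta t (inl (tt j)) None s' = (s' == fin S) || (s' == inl (tt j.-1)).
  move=> j /andP [j0 jn]; case=> [y|[|]] /=.
  - apply/existsP/eqP.
      move=> [i /and3P [ip /eqP ti /eqP <-]].
      have -> : i = inord j by apply: tinj.
      by rewrite inordK.
    move=> [->]; exists (inord j); rewrite inordK ?ltnS // j0 eqxx /=.
    by rewrite /tt.
  - by apply/existsP; exists (inord j); rewrite inordK ?ltnS // j0 eqxx.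
  - apply/eqP => e; have := injn 0%N j isT jn.
    rewrite /tt; have -> : (inord 0 : 'I_n.+1) = ord0 by apply: val_inj; rewrite /= inordK.
    by move=> /(_ e) h; rewrite -h in j0.
have succ_ex : forall j, (j <= n)%N -> [exists s', N_trans Delta t (inl (tt j)) None s'].
  move=> j jn; apply/existsP; case: j jn => [|j] jn.
    by exists (fail S); rewrite tr0.
  by exists (fin S); rewrite trS.
have step0 : forall k, RW k (inl (tt 0)) = 0.
  case=> // k; rewrite /RW /= sig; apply: big1 => s' _.
  have [hpos hz _] := Hval _ _ (succ_ex 0%N isT).
  case: (eqVneq s' (fail S)) => [->|ne].
    have h := RWfail k; rewrite /RW /= in h; by rewrite h mulr0.
  by rewrite hz ?mul0r // tr0 ne.
pose p j := val (inl (tt j)) None (fin S).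
pose q j := val (inl (tt j)) None (inl (tt j.-1)).
have sumF : forall j, (0 < j <= n)%N -> forall F : NS S -> R,
    \sum_(s' : NS S) val (inl (tt j)) None s' * F s' =
    p j * F (fin S) + q j * F (inl (tt j.-1)).
  move=> j hj F; have /andP [_ jn] := hj.
  have [hpos hz _] := Hval _ _ (succ_ex j jn).
  rewrite (bigD1 (fin S)) //= (bigD1 (inl (tt j.-1))) //= big1 ?addr0 //.
  move=> s' /andP [n2 n1]; rewrite hz ?mul0r // trS //.
  by rewrite negb_or n1 n2.
have pq : forall j, (0 < j <= n)%N -> [/\ 0 < p j, 0 < q j & p j + q j = 1].
  move=> j hj; have /andP [_ jn] := hj.
  have [hpos hz hs] := Hval _ _ (succ_ex j jn).
  split; try (apply: hpos; rewrite trS // eqxx ?orbT //).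
  rewrite -hs; have := sumF j hj (fun _ => 1); rewrite !mulr1.
  by under eq_bigr do rewrite mulr1; move=> ->.
have stepS : forall k j, (0 < j <= n)%N ->
    RW k.+1 (inl (tt j)) = p j + q j * RW k (inl (tt j.-1)).
  move=> k j hj; have h := RWfin k; rewrite /RW /= in h.
  by rewrite /RW /= sig sumF //= h mulr1.
have monoRW : forall k j, (j <= n)%N -> RW k (inl (tt j)) <= RW k.+1 (inl (tt j)).
  elim=> [|k IH] [|j] jn.
  - by rewrite !step0.
  - rewrite RW0 (stepS 0%N j.+1 jn) /= RW0 mulr0 addr0.
    by have [hp _ _] := pq j.+1 jn; exact: ltW.
  - by rewrite !step0.
  - rewrite (stepS k.+1 j.+1 jn) (stepS k j.+1 jn) /=.
    have [hp hq _] := pq j.+1 jn; apply: lerD => //.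
    by apply: ler_wpM2l; [exact: ltW | exact: (IH j (ltnW jn))].
have stab : forall j k, (j <= k)%N -> (j <= n)%N -> RW k (inl (tt j)) = RW j (inl (tt j)).
  elim=> [|j IH] k jk jn; first by rewrite !step0.
  case: k jk => // k jk; rewrite (stepS k j.+1 jn) (stepS j j.+1 jn) /=.
  by rewrite IH // ltnW.
have monod : forall k d j, (j <= n)%N -> RW k (inl (tt j)) <= RW (k + d)%N (inl (tt j)).
  move=> k; elim=> [|d IH] j jn; first by rewrite addn0.
  by rewrite addnS; apply: le_trans (IH j jn) (monoRW _ _ jn).
have lt1 : forall k j, (j <= n)%N -> RW k (inl (tt j)) < 1.
  elim=> [|k IH] [|j] jn; rewrite ?step0 ?RW0 ?ltr01 //.
  have [hp hq hs] := pq j.+1 jn; rewrite (stepS k j.+1 jn) /=.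
  have := IH j (ltnW jn); nra.
have probv : forall j, (j <= n)%N ->
    prob_reach (@N_target S) val sigma (fin S) (inl (tt j)) = RW j (inl (tt j)).
  move=> j jn; apply: sup_max; first by exists j.
  move=> y [k _ <-]; case: (leqP k j) => kj.
    by have := monod k (j - k)%N j jn; rewrite subnKC.
  by rewrite le_eqVlt; apply/orP; left; apply/eqP; exact: (stab j k (ltnW kj) jn).
split.
  have -> : t ord0 = tt 0%N by rewrite /tt; congr t; apply: val_inj; rewrite /= inordK.
  by rewrite probv // step0.
move=> i lin; rewrite -/(tt i) -/(tt i.+1) !probv ?(ltnW lin) //.
have [hp hq hs] := pq i.+1 lin; rewrite (stepS i i.+1 lin) /=.
have := lt1 i i (ltnW lin); nra.
Qed.
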